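(* Let $p\geq 6$ be even, and write the vertices of $C_p\,\square\, C_3$ as $a_i,b_i,c_i$ ($i\in\{1,\dots,p\}$), where for each $i$ the vertices $a_i,b_i,c_i$ form a triangle, and for each of the letters $x\in\{a,b,c\}$ the vertices $x_1,x_2,\dots,x_p$ form a cycle in this cyclic order (indices modulo $p$). Then there exists a perfect matching of $C_p\,\square\, C_3$ containing the nine edges $a_1a_2,\ b_1b_2,\ c_1c_2,\ a_3c_3,\ b_3b_4,\ a_4a_5,\ c_4c_5,\ b_5b_6,\ a_6c_6$, and no perfect matching containing these nine edges can be extended to a Hamiltonian cycle. In particular, $C_p\,\square\, C_3$ does not have the PMH--property.
   Context: $C_n$ denotes the cycle on $n$ vertices. The Cartesian product $G\,\square\, H$ of graphs $G$ and $H$ has vertex set $V(G)\times V(H)$, where $(u,v)$ and $(u',v')$ are adjacent if and only if either $u=u'$ and $vv'\in E(H)$, or $uu'\in E(G)$ and $v=v'$. A perfect matching $M$ of a graph $G$ can be extended to a Hamiltonian cycle if there exists a perfect matching $N$ of $G$ such that $M\cup N$ is (the edge set of) a Hamiltonian cycle of $G$. A graph has the PMH--property if it admits at least one perfect matching and every perfect matching of it can be extended to a Hamiltonian cycle. *)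

(* Defs.v *)
From mathcomp Require Import all_boot.
Set Implicit Arguments. Unset Strict Implicit. Unset Printing Implicit Defensive.

(* Simple graphs: a symmetric irreflexive relation [G : rel T] on a finType.
   An edge is represented as a 2-element set [set u; v]. *)
Section Graphs.
Variable T : finType.

Definition is_edge (G : rel T) (e : {set T}) : Prop :=
  exists u v, G u v /\ e = [set u; v].

Definition perfect_matching (G : rel T) (M : {set {set T}}) : Prop :=
  (forall e, e \in M -> is_edge G e) /\
  (forall v : T, #|[set e in M | v \in e]| = 1).

Definition hamiltonian_cycle_edges (G : rel T) (H : {set {set T}}) : Prop :=
  exists s : seq T,
    [/\ uniq s, size s = #|T|, 3 <= size s, cycle G s &
        H = [set [set e.1; e.2] | e in zip s (rot 1 s)]].

Definition extends_to_ham (G : rel T) (M : {set {set T}}) : Prop :=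
  exists N, perfect_matching G N /\ hamiltonian_cycle_edges G (M :|: N).

Definition PMH (G : rel T) : Prop :=
  (exists M, perfect_matching G M) /\
  (forall M, perfect_matching G M -> extends_to_ham G M).
End Graphs.

Definition cycle_adj (n : nat) : rel 'I_n :=
  fun i j => (i != j) && ((j == i.+1 %% n :> nat) || (i == j.+1 %% n :> nat)).

Definition cart_prod (A B : finType) (G : rel A) (H : rel B) : rel (A * B) :=
  fun x y => ((x.1 == y.1) && H x.2 y.2) || (G x.1 y.1 && (x.2 == y.2)).

Definition CpC3 (p : nat) : rel ('I_p * 'I_3) := cart_prod (@cycle_adj p) (@cycle_adj 3).

Definition la : 'I_3 := @Ordinal 3 0 isT.
Definition lb : 'I_3 := @Ordinal 3 1 isT.
Definition lc : 'I_3 := @Ordinal 3 2 isT.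

(* [isv x i v] : v is the vertex x_i (i in 1..p, indices mod p), i.e. the
   vertex (i-1 mod p, x) of C_p [] C_3. *)
Definition isv (p : nat) (x : 'I_3) (i : nat) (v : 'I_p * 'I_3) : bool :=
  (v.2 == x) && (v.1 == (i.-1 %% p) :> nat).

Definition ed (p : nat) (x : 'I_3) (i : nat) (y : 'I_3) (j : nat) : {set 'I_p * 'I_3} :=
  [set v | isv x i v || isv y j v].

Definition nine_edges (p : nat) : {set {set 'I_p * 'I_3}} :=
  [set ed p la 1 la 2; ed p lb 1 lb 2; ed p lc 1 lc 2;
       ed p la 3 lc 3; ed p lb 3 lb 4; ed p la 4 la 5;
       ed p lc 4 lc 5; ed p lb 5 lb 6; ed p la 6 lc 6].

Arguments CpC3 p : clear implicits.
Arguments nine_edges p : clear implicits.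
Arguments ed p x i y j : clear implicits.
Arguments isv p x i v : clear implicits.

(* Main.v *)
Require Import Defs.
From mathcomp Require Import all_boot all_algebra zify.
Set Implicit Arguments. Unset Strict Implicit. Unset Printing Implicit Defensive.

Lemma closure_path (T : eqType) (f : T -> T) (S : pred T) x l :
  path (frel f) x l -> (forall z, S z -> S (f z)) -> S x -> all S l.
Proof.
elim: l x => [|y l IH] x //= /andP[/eqP <- P] cl Sx.
by rewrite (cl _ Sx) /=; apply: IH P cl (cl _ Sx).
Qed.

Lemma par_path (T : eqType) (f : T -> T) (S : pred T) x l y :
  path (frel f) x (rcons l y) ->
  odd (count (fun z => S z != S (f z)) (x :: l)) = (S x != S y).
Proof.
elim: l x => [|z l IH] x /=.
  by rewrite andbT => /eqP <-; rewrite addn0 oddb.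
move=> /andP[/eqP <- P]; rewrite oddD oddb.
have := IH _ P; rewrite /= => ->.
by case: (S x); case: (S (f x)); case: (S y).
Qed.

Lemma zip_path (T : eqType) (f : T -> T) x l y :
  path (frel f) x (rcons l y) ->
  zip (x :: l) (rcons l y) = map (fun z => (z, f z)) (x :: l).
Proof.
elim: l x => [|z l IH] x /=; first by rewrite andbT => /eqP ->.
by move=> /andP[/eqP <- P]; rewrite (IH _ P).
Qed.

Lemma rot_closure (T : eqType) (l : seq T) (S : pred T) y0 :
  uniq l -> y0 \in l -> (forall z, S z -> S (next l z)) -> S y0 ->
  forall y, y \in l -> S y.
Proof.
move=> Ul y0l cl Sy0 y yl.
case/rot_to: y0l => i l' e.
have Q : fcycle (next l) (y0 :: l') by rewrite -e rot_cycle; exact: cycle_next.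
have := closure_path Q cl Sy0 => /allP A.
have : y \in y0 :: l' by rewrite -e mem_rot.
rewrite inE => /orP[/eqP -> //|yl'].
by apply: A; rewrite mem_rcons inE yl' orbT.
Qed.

Lemma nn_neq (T : eqType) (l : seq T) x :
  uniq l -> 3 <= size l -> x \in l -> next l (next l x) != x.
Proof.
move=> Ul Sl xl; apply/eqP => h.
have A := @rot_closure T l (mem [:: x; next l x]) x Ul xl.
have : {subset l <= [:: x; next l x]}.
  move=> y; apply: A; last by rewrite /= !inE eqxx.
  by move=> z; rewrite !inE => /orP[/eqP ->|/eqP ->]; rewrite ?h eqxx ?orbT.
move/(uniq_leq_size Ul) => /=; lia.
Qed.

Lemma card_count (T : finType) (C : {pred T}) (l : seq T) :
  uniq l -> {subset C <= l} -> #|C| = count (mem C) l.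
Proof.
move=> Ul sub; rewrite -size_filter -(card_uniqP (filter_uniq _ Ul)).
apply: eq_card => x; rewrite mem_filter.
by apply/idP/andP => [h|[]//]; split => //; apply: sub.
Qed.

Lemma set2_eq (T : finType) (a b u v : T) :
  [set a; b] = [set u; v] -> (a = u /\ b = v) \/ (a = v /\ b = u).
Proof.
move=> e.
have : a \in [set u; v] by rewrite -e !inE eqxx.
have : b \in [set u; v] by rewrite -e !inE eqxx orbT.
have : u \in [set a; b] by rewrite e !inE eqxx.
have : v \in [set a; b] by rewrite e !inE eqxx orbT.
rewrite !inE.
by case/orP=> /eqP h1; case/orP=> /eqP h2; case/orP=> /eqP h3; case/orP=> /eqP h4;
  subst; auto.
Qed.

Lemma cadj (m : nat) (i j : 'I_m) : cycle_adj i j ->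
  ((j : nat) = i.+1 /\ i.+1 < m) \/ ((i : nat) = j.+1 /\ j.+1 < m) \/
  (i.+1 = m /\ (j : nat) = 0) \/ (j.+1 = m /\ (i : nat) = 0).
Proof.
rewrite /cycle_adj => /andP[_ /orP[/eqP e|/eqP e]].
  case: (ltnP i.+1 m) => h; first by left; rewrite e modn_small.
  have e2 : i.+1 = m by apply/eqP; rewrite eqn_leq h ltn_ord.
  by right; right; left; rewrite e e2 modnn.
case: (ltnP j.+1 m) => h; first by right; left; rewrite e modn_small.
have e2 : j.+1 = m by apply/eqP; rewrite eqn_leq h ltn_ord.
by right; right; right; rewrite e e2 modnn.
Qed.

Lemma cadj_sym (m : nat) (i j : 'I_m) : cycle_adj i j = cycle_adj j i.
Proof. by rewrite /cycle_adj eq_sym orbC. Qed.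

Lemma pm_inv (T : finType) (G : rel T) (f : T -> T) :
  involutive f -> (forall v, G v (f v)) ->
  perfect_matching G [set [set v; f v] | v : T].
Proof.
move=> fK Gf; split.
  by move=> e /imsetP[v _ ->]; exists v, (f v).
move=> v.
suff -> : [set e in [set [set v; f v] | v : T] | v \in e] = [set [set v; f v]].
  by rewrite cards1.
apply/setP => e; rewrite !inE.
apply/andP/eqP => [[/imsetP[u _ ->]]|->]; last first.
  by split; [apply/imsetP; exists v | rewrite !inE eqxx].
rewrite !inE => /orP[/eqP <- //|/eqP ->].
by rewrite fK setUC.
Qed.

Section Graph.
Variable q : nat.
Local Notation n := q.+3.+3.
Local Notation T := (prod (ordinal n) (ordinal 3)).
Local Notation G := (CpC3 n).

Definition V (i : nat) (r : 'I_3) : T := (inZp i, r).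

Lemma valV i : i < n -> val (inZp i : 'I_n) = i.
Proof. exact: modn_small. Qed.

Lemma Vsurj (u : T) : u = V u.1 u.2.
Proof. by case: u => j t; congr pair; apply: val_inj; rewrite /= modn_small. Qed.

Lemma rows (t : 'I_3) : t = la \/ t = lb \/ t = lc.
Proof.
case: t => [[|[|[|t]]] Ht]; [left|right;left|right;right|by []]; exact: val_inj.
Qed.

Lemma G_sym u v : G u v = G v u.
Proof.
rewrite /CpC3 /cart_prod [cycle_adj u.2 _]cadj_sym [cycle_adj u.1 _]cadj_sym.
by rewrite [u.1 == _]eq_sym [u.2 == _]eq_sym.
Qed.

Lemma G_irr u : ~~ G u u.
Proof. by rewrite /CpC3 /cart_prod /cycle_adj !eqxx. Qed.

Lemma G_struct u w : G u w ->
  (u.1 = w.1 /\ u.2 != w.2) \/ (cycle_adj u.1 w.1 /\ u.2 = w.2).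
Proof.
rewrite /CpC3 /cart_prod => /orP[/andP[/eqP -> h]|/andP[h /eqP ->]].
  by left; split => //; case/andP: h.
by right.
Qed.

Lemma nbrs i r w : 1 <= i <= 4 -> G (V i r) w ->
  w = V i.-1 r \/ w = V i.+1 r \/ w = V i la \/ w = V i lb \/ w = V i lc.
Proof.
move=> hi /G_struct [[e _]|[h e]].
  rewrite (Vsurj w) -e /= modn_small; last by lia.
  by case: (rows w.2) => [->|[->|->]]; auto.
have := cadj h; rewrite /= modn_small; last by lia.
move=> c; have hw := ltn_ord w.1.
rewrite (Vsurj w) -e /=.
have [e1|e1] : (w.1 : nat) = i.-1 \/ (w.1 : nat) = i.+1 by lia.
  by left; rewrite e1.
by right; left; rewrite e1.
Qed.

Lemma hor (c d : 'I_n) r : (d : nat) = c.+1 -> G (c, r) (d, r).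
Proof.
move=> h; rewrite /CpC3 /cart_prod /= eqxx andbT; apply/orP; right.
rewrite /cycle_adj -val_eqE /= h neq_ltn ltnSn modn_small ?eqxx // -h; exact: ltn_ord.
Qed.


Section Core.
Variable s : seq T.
Hypotheses (Us : uniq s) (Hsz : size s = #|{: T}|) (H3 : 3 <= size s) (Hc : cycle G s).
Local Notation nx := (next s).
Local Notation pv := (prev s).

Lemma alls x : x \in s.
Proof.
have e : #|s| = #|{: T}| by rewrite (card_uniqP Us).
have /subset_cardP := e => /(_ (subset_predT _)) A.
by rewrite A.
Qed.

Definition E u v := (nx u == v) || (nx v == u).

Lemma Esym u v : E u v = E v u.
Proof. by rewrite /E orbC. Qed.

Lemma nxK : cancel nx pv. Proof. exact: prev_next. Qed.
Lemma pvK : cancel pv nx. Proof. exact: next_prev. Qed.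

Lemma nn x : nx (nx x) != x.
Proof. exact: nn_neq (alls x). Qed.

Lemma Echar v x : E v x = (x == nx v) || (x == pv v).
Proof.
rewrite /E [nx v == x]eq_sym; congr orb.
by apply/eqP/eqP => [<-|->]; [rewrite nxK | rewrite pvK].
Qed.

Lemma nxpv v : nx v != pv v.
Proof. by have := nn (pv v); rewrite pvK. Qed.

Lemma nxG x : G x (nx x). Proof. exact: next_cycle Hc (alls x). Qed.
Lemma pvG x : G x (pv x). Proof. by rewrite G_sym; exact: prev_cycle Hc (alls x). Qed.

Lemma other v x : E v x -> exists y, [/\ y != x, E v y & G v y].
Proof.
rewrite Echar => /orP[/eqP ->|/eqP ->]; [exists (pv v) | exists (nx v)];
  rewrite Echar eqxx ?orbT.
  by split => //; [rewrite eq_sym nxpv | exact: pvG].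
by split => //; [rewrite nxpv | exact: nxG].
Qed.

Lemma full v x y z : E v x -> E v y -> x != y -> E v z -> (z == x) || (z == y).
Proof.
rewrite !Echar.
move=> /orP[/eqP->|/eqP->] /orP[/eqP->|/eqP->]; rewrite ?eqxx // => _
  /orP[/eqP->|/eqP->]; by rewrite eqxx ?orbT.
Qed.

Lemma addE u v : (nx u == v) + (nx v == u) = E u v.
Proof.
rewrite /E; case: eqP => [h|] ; case: eqP => [h'|] //.
by have := nn u; rewrite h h' eqxx.
Qed.

Lemma allS (S : pred T) y0 : (forall z, S z -> S (nx z)) -> S y0 -> forall y, S y.
Proof. by move=> cl Sy0 y; apply: (rot_closure Us (alls y0) cl Sy0 (alls y)). Qed.

Lemma noclosed l : cycle E l -> uniq l -> 3 <= size l -> (exists z, z \notin l) -> False.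
Proof.
move=> Cl Ul Sl [z zl].
have key : forall x y, x \in l -> E x y -> y \in l.
  move=> x y xl Exy.
  have h1 : E x (next l x) by exact: next_cycle Cl xl.
  have h2 : E x (prev l x) by rewrite Esym; exact: prev_cycle Cl xl.
  have h3 : next l x != prev l x.
    have pl : prev l x \in l by rewrite mem_prev.
    by have := nn_neq Ul Sl pl; rewrite next_prev.
  have := full h1 h2 h3 Exy.
  by case/orP => /eqP ->; rewrite ?mem_next ?mem_prev.
have [w wl] : exists w, w \in l by case: l Sl {Cl Ul zl key} => // a l _; exists a; rewrite inE eqxx.
have cl : forall x, x \in l -> nx x \in l by move=> x xl; apply: key xl _; rewrite /E eqxx.
have := allS (S := mem l) cl wl z. by rewrite /= (negbTE zl).
Qed.

Lemma inH u v : [set u; v] \in [set [set e.1; e.2] | e in zip s (rot 1 s)] -> E u v.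
Proof.
have [x0 [l Es]] : exists x0 l, s = x0 :: l by case: s H3 => // x l _; exists x, l.
set f := next s.
have P : path (frel f) x0 (rcons l x0) by have := cycle_next Us; rewrite -/f Es.
rewrite Es rot1_cons (zip_path P) => /imsetP [[a b]] /mapP[z _ [-> ->]] /= e.
by case: (set2_eq e) => [[-> ->]|[-> ->]]; rewrite /E eqxx ?orbT.
Qed.


Section Cut.
Variable k : nat.
Hypothesis hk : 2 <= k <= 4.
Definition Sk (v : T) : bool := (1 <= v.1) && (v.1 <= k).

Lemma cross u w : Sk u != Sk w -> G u w -> u.2 = w.2 /\
  (((u.1 : nat) = 0 /\ (w.1 : nat) = 1) \/ ((u.1 : nat) = 1 /\ (w.1 : nat) = 0) \/
   ((u.1 : nat) = k /\ (w.1 : nat) = k.+1) \/ ((u.1 : nat) = k.+1 /\ (w.1 : nat) = k)).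
Proof.
move=> hS /G_struct [[e _]|[h e]]; first by rewrite /Sk e eqxx in hS.
split => //; have := cadj h; have := ltn_ord u.1; have := ltn_ord w.1.
move: hS; rewrite /Sk.
by case: (leqP 1 u.1) => ?; case: (leqP u.1 k) => ?; case: (leqP 1 w.1) => ?;
  case: (leqP w.1 k) => ? //= *; lia.
Qed.

Lemma inC i j r :
  (i = 0 /\ j = 1) \/ (i = 1 /\ j = 0) \/ (i = k /\ j = k.+1) \/ (i = k.+1 /\ j = k) ->
  (Sk (V i r) != Sk (nx (V i r))) = (nx (V i r) == V j r).
Proof.
move=> hij; have hi : i < n by lia.
have hj : j < n by lia.
apply/idP/eqP => [hC|->].
  have [e hc] := cross hC (nxG _).
  rewrite (Vsurj (nx _)) -e /=.
  suff -> : ((nx (V i r)).1 : nat) = j by [].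
  by move: hc; rewrite /= modn_small //; lia.
rewrite /Sk /= !modn_small //.
by case: (leqP 1 i) => ?; case: (leqP i k) => ?; case: (leqP 1 j) => ?;
  case: (leqP j k) => ? //=; exfalso; lia.
Qed.

Definition K : seq T := [:: V 0 la; V 1 la; V 0 lb; V 1 lb; V 0 lc; V 1 lc;
  V k la; V k.+1 la; V k lb; V k.+1 lb; V k lc; V k.+1 lc].

Lemma cutpar : uniq K ->
  ~~ odd (E (V 0 la) (V 1 la) + (E (V 0 lb) (V 1 lb) + (E (V 0 lc) (V 1 lc) +
     (E (V k la) (V k.+1 la) + (E (V k lb) (V k.+1 lb) + E (V k lc) (V k.+1 lc)))))).
Proof.
move=> UK.
pose C : {pred T} := fun x => Sk x != Sk (nx x).
have [x0 [l Es]] : exists x0 l, s = x0 :: l by case: s H3 => // x l _; exists x, l.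
set f := next s.
have P : path (frel f) x0 (rcons l x0) by have := cycle_next Us; rewrite -/f Es.
have par : odd (count C s) = false.
  by have := @par_path _ _ Sk _ _ _ P; rewrite -Es eqxx.
have c1 : #|C| = count (mem C) s := card_count Us (fun x _ => alls x).
have subK : {subset C <= K}.
  move=> x hx; have [e hc] := cross hx (nxG x).
  rewrite (Vsurj x).
  have : (x.1 : nat) = 0 \/ (x.1 : nat) = 1 \/ (x.1 : nat) = k \/ (x.1 : nat) = k.+1 by lia.
  by case=> [->|[->|[->|->]]]; case: (rows x.2) => [->|[->|->]]; rewrite !inE eqxx /= ?orbT.
have c2 : #|C| = count (mem C) K := card_count UK subK.
move: par; rewrite -[count C s]/(count (mem C) s) -c1 c2 /=.
rewrite /C !unfold_in /=.
rewrite (@inC 0 1 la); last by lia.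
rewrite (@inC 1 0 la); last by lia.
rewrite (@inC 0 1 lb); last by lia.
rewrite (@inC 1 0 lb); last by lia.
rewrite (@inC 0 1 lc); last by lia.
rewrite (@inC 1 0 lc); last by lia.
rewrite (@inC k k.+1 la); last by lia.
rewrite (@inC k.+1 k la); last by lia.
rewrite (@inC k k.+1 lb); last by lia.
rewrite (@inC k.+1 k lb); last by lia.
rewrite (@inC k k.+1 lc); last by lia.
rewrite (@inC k.+1 k lc); last by lia.
rewrite -!addE !addnA addn0.
by move=> ->.
Qed.
End Cut.


Ltac ecyc := rewrite /=; repeat (apply/andP; split); try done; rewrite Esym; done.

Lemma core :
  E (V 0 la) (V 1 la) -> E (V 0 lb) (V 1 lb) -> E (V 0 lc) (V 1 lc) ->
  E (V 2 la) (V 2 lc) -> E (V 2 lb) (V 3 lb) -> E (V 3 la) (V 4 la) ->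
  E (V 3 lc) (V 4 lc) -> E (V 4 lb) (V 5 lb) -> E (V 5 la) (V 5 lc) -> False.
Proof.
move=> e1 e2 e3 e4 e5 e6 e7 e8 e9.
have b34 : E (V 3 lb) (V 4 lb).
  have := @cutpar 3 isT isT; rewrite e1 e2 e3 e6 e7.
  by case: (E (V 3 lb) (V 4 lb)).
have ac : E (V 2 la) (V 3 la) = E (V 2 lc) (V 3 lc).
  have := @cutpar 2 isT isT; rewrite e1 e2 e3 e5.
  by case: (E (V 2 la) (V 3 la)); case: (E (V 2 lc) (V 3 lc)).
have fb3 : forall z, E (V 3 lb) z -> (z == V 2 lb) || (z == V 4 lb).
  by move=> z; apply: full => //; rewrite Esym.
have fb4 : forall z, E (V 4 lb) z -> (z == V 3 lb) || (z == V 5 lb).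
  by move=> z; apply: full => //; rewrite Esym.
case ea: (E (V 2 la) (V 3 la)).
- have ec : E (V 2 lc) (V 3 lc) by rewrite -ac.
  have e6' : E (V 4 la) (V 3 la) by rewrite Esym.
  have [y [ny Ey Gy]] := other e6'.
  case: (nbrs (i:=4) isT Gy) => [|[|[|[|]]]] ?; subst y.
  + by rewrite eqxx in ny.
  + have e7' : E (V 4 lc) (V 3 lc) by rewrite Esym.
    have [z [nz Ez Gz]] := other e7'.
    case: (nbrs (i:=4) isT Gz) => [|[|[|[|]]]] ?; subst z.
    * by rewrite eqxx in nz.
    * apply: (@noclosed [:: V 2 la; V 3 la; V 4 la; V 5 la; V 5 lc; V 4 lc; V 3 lc; V 2 lc]) => //;
        last by exists (V 0 lb).
      by ecyc.
    * have : E (V 4 la) (V 4 lc) by rewrite Esym.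
      by move/(full e6' Ey isT).
    * by have := fb4 _ (etrans (Esym _ _) Ez).
    * by rewrite (negbTE (G_irr _)) in Gz.
  + by rewrite (negbTE (G_irr _)) in Gy.
  + by have := fb4 _ (etrans (Esym _ _) Ey).
  + apply: (@noclosed [:: V 2 la; V 3 la; V 4 la; V 4 lc; V 3 lc; V 2 lc]) => //;
      last by exists (V 0 lb).
    by ecyc.
- have [y [ny Ey Gy]] := other e6.
  case: (nbrs (i:=3) isT Gy) => [|[|[|[|]]]] ?; subst y.
  + by rewrite Esym ea in Ey.
  + by rewrite eqxx in ny.
  + by rewrite (negbTE (G_irr _)) in Gy.
  + by have := fb3 _ (etrans (Esym _ _) Ey).
  have e6' : E (V 4 la) (V 3 la) by rewrite Esym.
  have [y2 [ny2 Ey2 Gy2]] := other e6'.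
  case: (nbrs (i:=4) isT Gy2) => [|[|[|[|]]]] ?; subst y2.
  + by rewrite eqxx in ny2.
  + have e7' : E (V 4 lc) (V 3 lc) by rewrite Esym.
    have [z [nz Ez Gz]] := other e7'.
    case: (nbrs (i:=4) isT Gz) => [|[|[|[|]]]] ?; subst z.
    * by rewrite eqxx in nz.
    * apply: (@noclosed [:: V 3 la; V 4 la; V 5 la; V 5 lc; V 4 lc; V 3 lc]) => //;
        last by exists (V 0 lb).
      by ecyc.
    * have : E (V 4 la) (V 4 lc) by rewrite Esym.
      by move/(full e6' Ey2 isT).
    * by have := fb4 _ (etrans (Esym _ _) Ez).
    * by rewrite (negbTE (G_irr _)) in Gz.
  + by rewrite (negbTE (G_irr _)) in Gy2.
  + by have := fb4 _ (etrans (Esym _ _) Ey2).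
  + apply: (@noclosed [:: V 3 la; V 4 la; V 4 lc; V 3 lc]) => //;
      last by exists (V 0 lb).
    by ecyc.
Qed.

End Core.

Definition pf (i : nat) (r : 'I_3) : nat * 'I_3 :=
  match i with
  | 0 => (1, r)
  | 1 => (0, r)
  | 2 => if r == lb then (3, lb) else (2, if r == la then lc else la)
  | 3 => if r == lb then (2, lb) else (4, r)
  | 4 => if r == lb then (5, lb) else (3, r)
  | 5 => if r == lb then (4, lb) else (5, if r == la then lc else la)
  | _ => (if odd i then i.-1 else i.+1, r)
  end.

Definition fP (v : T) : T := (inZp (pf v.1 v.2).1, (pf v.1 v.2).2).

Hypothesis hq : ~~ odd q.

Lemma pf_spec i r : i < n ->
  [/\ (pf i r).1 < n, pf (pf i r).1 (pf i r).2 = (i, r) &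
      G (V i r) (V (pf i r).1 (pf i r).2)].
Proof.
case: i => [|[|[|[|[|[|k]]]]]] hi;
  try by case: (rows r) => [->|[->|->]]; split => //; rewrite G_sym; apply: hor; rewrite /= !modn_small.
have ho : odd k.+3.+3 = odd k by rewrite /= !negbK.
have -> : pf k.+3.+3 r = (if odd k then k.+1.+4 else k.+3.+4, r) by rewrite /pf ho.
case ok: (odd k).
  case: k ok hi ho => [//|k] ok hi ho /=.
  move: ok; rewrite /= !negbK => /negbTE ->.
  split => //; first by lia.
  rewrite G_sym; apply: hor; rewrite /= !modn_small //; lia.
have hk : k.+1 != q.
  by apply/eqP => e; move: hq; rewrite -e /= ok.
rewrite /= !negbK ok /=.
split => //; first by lia.
apply: hor; rewrite /= !modn_small //; lia.
Qed.

Lemma fP_inv : involutive fP.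
Proof.
move=> v; have [h1 h2 _] := pf_spec v.2 (ltn_ord v.1).
rewrite {2}(Vsurj v) /fP /= modn_small // h2 /=.
by [].
Qed.

Lemma fP_G v : G v (fP v).
Proof.
have [_ _ h3] := pf_spec v.2 (ltn_ord v.1).
by rewrite {1}(Vsurj v).
Qed.

Lemma edE x i y j : i.-1 < n -> j.-1 < n ->
  ed n x i y j = [set V i.-1 x; V j.-1 y].
Proof.
move=> hi hj; apply/setP => -[c t].
rewrite !inE /isv /= /V !xpair_eqE -!val_eqE /= !modn_small //.
by rewrite [(t == x) && _]andbC [(t == y) && _]andbC.
Qed.

Lemma main_q :
  [/\ exists M, perfect_matching G M /\ nine_edges n \subset M,
      (forall M, perfect_matching G M -> nine_edges n \subset M ->
         ~ extends_to_ham G M)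
    & ~ PMH G].
Proof.
have partA : exists M, perfect_matching G M /\ nine_edges n \subset M.
  exists [set [set v; fP v] | v : T]; split; first exact: pm_inv fP_inv fP_G.
  apply/subsetP => e; rewrite /nine_edges !inE.
  rewrite -!orbA => /orP[/eqP->|/orP[/eqP->|/orP[/eqP->|/orP[/eqP->|/orP[/eqP->|/orP[/eqP->|/orP[/eqP->|/orP[/eqP->|/eqP->]]]]]]]];
    rewrite edE //; apply/imsetP.
  - by exists (V 0 la); last reflexivity.
  - by exists (V 0 lb); last reflexivity.
  - by exists (V 0 lc); last reflexivity.
  - by exists (V 2 la); last reflexivity.
  - by exists (V 2 lb); last reflexivity.
  - by exists (V 3 la); last reflexivity.
  - by exists (V 3 lc); last reflexivity.
  - by exists (V 4 lb); last reflexivity.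
  - by exists (V 5 la); last reflexivity.
have partB : forall M, perfect_matching G M -> nine_edges n \subset M ->
         ~ extends_to_ham G M.
  move=> M pmM sub [N [pmN [s [Us Hsz H3 Hc HH]]]].
  have hE : forall x i y j, ed n x i y j \in nine_edges n -> i.-1 < n -> j.-1 < n ->
      E s (V i.-1 x) (V j.-1 y).
    move=> x i y j /(subsetP sub) hM hi hj.
    apply: inH => //; rewrite -HH; apply/setUP; left.
    by rewrite -edE.
  apply: (core Us Hsz H3 Hc (hE la 1 la 2 _ isT isT) (hE lb 1 lb 2 _ isT isT)
    (hE lc 1 lc 2 _ isT isT) (hE la 3 lc 3 _ isT isT) (hE lb 3 lb 4 _ isT isT)
    (hE la 4 la 5 _ isT isT) (hE lc 4 lc 5 _ isT isT) (hE lb 5 lb 6 _ isT isT)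
    (hE la 6 lc 6 _ isT isT)); rewrite /nine_edges !inE eqxx /= ?orbT //.
split => //.
case=> _ hall; case: partA => M [pm sub].
exact: partB M pm sub (hall M pm).
Qed.

End Graph.

Theorem mainTheorem3 (p : nat) (hp6 : 6 <= p) (hpe : ~~ odd p) :
  [/\ exists M, perfect_matching (CpC3 p) M /\ nine_edges p \subset M,
      (forall M, perfect_matching (CpC3 p) M -> nine_edges p \subset M ->
         ~ extends_to_ham (CpC3 p) M)
    & ~ PMH (CpC3 p)].
Proof.
have [q Hq] : exists q, p = q.+3.+3 by exists (p - 6); lia.
subst p; apply: main_q.
by move: hpe; rewrite /= !negbK.
Qed.
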